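(* Let $p$ be a prime, let $\Gamma$ be a finite connected $p$-valent arc-transitive graph, and let $G\le \mathrm{Aut}(\Gamma)$ be a solvable group acting transitively on the arcs of $\Gamma$. Then $G$, as a permutation group on the vertex set of $\Gamma$, has the EKR property.
   Context: For a permutation group $G$ on a finite set $V$, a subset $\mathcal{F}\subseteq G$ is intersecting if for all $g,h\in\mathcal{F}$ there is $v\in V$ with $g(v)=h(v)$. $G$ has the Erdős–Ko–Rado (EKR) property if the maximum size of an intersecting set of $G$ equals the maximum order of a point stabilizer $G_v$, $v\in V$. *)

(* Defs.v *)
From mathcomp Require Import all_boot all_fingroup all_solvable.
Set Implicit Arguments.
Unset Strict Implicit.
Unset Printing Implicit Defensive.
Local Open Scope group_scope.

Section EKR.
Variable V : finType.

Definition intersecting (G F : {set {perm V}}) : bool :=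
  (F \subset G) && [forall g in F, forall h in F, exists v, g v == h v].

Definition max_intersecting (G : {set {perm V}}) : nat :=
  \max_(F : {set {perm V}} | intersecting G F) #|F|.

Definition max_stabilizer (G : {group {perm V}}) : nat :=
  \max_(v : V) #|'C_G[v | 'P]|.

Definition EKR_property (G : {group {perm V}}) : Prop :=
  max_intersecting G = max_stabilizer G.

Definition simple_graph (e : rel V) : Prop :=
  irreflexive e /\ symmetric e.

Definition graph_connected (e : rel V) : Prop :=
  forall u v : V, connect e u v.

Definition regular_of_valency (e : rel V) (k : nat) : Prop :=
  forall v : V, #|[set w | e v w]| = k.

Definition automorphism_group (e : rel V) (G : {set {perm V}}) : Prop :=
  forall g, g \in G -> forall u v : V, e (g u) (g v) = e u v.

Definition arc_transitive_on (e : rel V) (G : {set {perm V}}) : Prop :=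
  forall u v x y : V, e u v -> e x y ->
    exists2 g, g \in G & (g u = x /\ g v = y).

End EKR.

(* Main.v *)
Require Import Defs.
From mathcomp Require Import all_boot all_fingroup all_solvable.
Set Implicit Arguments.
Unset Strict Implicit.
Unset Printing Implicit Defensive.
Local Open Scope group_scope.

Lemma ekr_from_clique (V : finType) (G : {group {perm V}}) (S : {set {perm V}}) :
  S \subset G -> #|S| = #|V| ->
  (forall s t, s \in S -> t \in S -> forall x, s x = t x -> s = t) ->
  (forall x y : V, exists2 g, g \in G & g x = y) ->
  EKR_property G.
Proof.
move=> sSG cardS cliq trans.
rewrite /EKR_property /max_intersecting /max_stabilizer.
have [V0|[v0 _]] := set_0Vmem [set: V].
  have noV : forall v : V, False by move=> v; have := in_setT v; rewrite V0 inE.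
  rewrite big1; last first.
    move=> F /andP[_ /forallP FF]; apply/eqP; rewrite cards_eq0; apply/eqP.
    apply/setP => g; rewrite inE; apply/negP => Fg.
    have := FF g; rewrite Fg /= => /forallP/(_ g); rewrite Fg /= => /existsP[v _].
    case: (noV v).
  by rewrite big1 // => v; case: (noV v).
have orbT : forall v, orbit 'P G v = [set: V].
  move=> v; apply/setP => y; rewrite inE; have [g Gg <-] := trans v y.
  exact: mem_orbit.
have stab : forall v, (#|V| * #|'C_G[v | 'P]|)%N = #|G|.
  by move=> v; rewrite -(card_orbit_stab 'P G v) orbT cardsT.
have Vpos : 0 < #|V| by rewrite -cardsT (cardD1 v0) inE.
have maxst : \max_(v : V) #|'C_G[v | 'P]| = #|'C_G[v0 | 'P]|.
  apply/eqP; rewrite eqn_leq; apply/andP; split.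
    apply/bigmax_leqP => v _.
    by rewrite -(leq_pmul2l Vpos) stab stab.
  exact: (@leq_bigmax_cond _ xpredT (fun v => #|'C_G[v | 'P]|) v0 isT).
rewrite maxst; apply/eqP; rewrite eqn_leq; apply/andP; split.
  apply/bigmax_leqP => F /andP[sFG /forallP FF].
  rewrite -(leq_pmul2l Vpos) stab -cardS.
  have E1 : muln #|S| #|F| = \sum_(s in S) #|[set g in G | (s * g)%g \in F]|.
    rewrite -sum_nat_const; apply: eq_bigr => s Ss.
    have Gs : s \in G by apply: (subsetP sSG).
    rewrite -(card_lcoset F s^-1); apply: eq_card => g; rewrite inE.
    apply/idP/idP.
      case/lcosetP => f Ff ->. rewrite mulKVg Ff andbT groupM ?groupV //.
      exact: (subsetP sFG).
    case/andP => Gg Fsg; apply/lcosetP; exists (s * g) => //; by rewrite mulKg.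
  rewrite E1.
  have E2 : \sum_(s in S) #|[set g in G | (s * g)%g \in F]|
      = \sum_(g in G) #|[set s in S | (s * g)%g \in F]|.
    rewrite (eq_bigr (fun s => \sum_(g in G) (((s * g)%g \in F) : nat))); last first.
      move=> s _; rewrite -sum1_card big_mkcond /= [RHS]big_mkcond /=.
      apply: eq_bigr => g _; rewrite inE; by case: (g \in G); case: (_ \in F).
    rewrite exchange_big /=; apply: eq_bigr => g _.
    rewrite -sum1_card [RHS]big_mkcond /= big_mkcond /=.
    by apply: eq_bigr => s _; rewrite inE; case: (s \in S); case: (_ \in F).
  rewrite E2 -sum1_card; apply: leq_sum => g Gg.
  apply/card_le1_eqP => s t; rewrite !inE => /andP[Ss Fs] /andP[St Ft].
  have := FF (s * g); rewrite Fs /= => /forallP/(_ (t * g)); rewrite Ft /= => /existsP[v /eqP].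
  rewrite !permM => /perm_inj; move/(cliq _ _ Ss St) => ->.
  done.
apply: (@leq_bigmax_cond _ (fun F => intersecting G F) (fun F => #|F|) ('C_G[v0 | 'P])).
rewrite /intersecting subsetIl /=; apply/forallP => g; apply/implyP => /setIP[_ /astab1P g1].
apply/forallP => h; apply/implyP => /setIP[_ /astab1P h1].
by apply/existsP; exists v0; rewrite /= -[g v0]/(aperm v0 g) -[h v0]/(aperm v0 h) g1 h1.
Qed.


Section Gen.
Variables (gT : finGroupType) (T : finType) (to : {action gT &-> T}).

Lemma orbitN_setact (N : {group gT}) g x :
  g \in 'N(N) -> to^* (orbit to N x) g = orbit to N (to x g).
Proof.
move=> nNg; apply/setP => z; rewrite setactE; apply/imsetP/orbitP.
- case=> y /orbitP[n Nn <-] ->; exists (n ^ g); first by rewrite memJ_norm.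
  by rewrite [RHS]actCJ.
- case=> m Nm <-; exists (to x (m ^ g^-1)); last by rewrite -actCJV.
  by apply: mem_orbit; rewrite memJ_norm ?groupV.
Qed.

Definition clique (G : {set gT}) (Om : {set T}) (S : {set gT}) :=
  [/\ S \subset G, #|S| = #|Om| &
      forall s t, s \in S -> t \in S -> forall x, x \in Om -> to x s = to x t -> s = t].

Lemma acts_of (G : {group gT}) (Om : {set T}) :
  {in G, forall g, {in Om, forall x, to x g \in Om}} -> [acts G, on Om | to].
Proof.
move=> actG; apply/actsP => g Gg x; apply/idP/idP; last exact: actG.
by move=> /(actG _ (groupVr Gg)); rewrite actK.
Qed.

Lemma lift_clique (G N : {group gT}) (Om : {set T}) (x0 : T) (S' Tn : {set gT}) :
  N \subset G -> G \subset 'N(N) ->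
  {in G, forall g, {in Om, forall x, to x g \in Om}} ->
  {in Om &, forall x y, exists2 g, g \in G & to x g = y} ->
  x0 \in Om ->
  Tn \subset N -> #|Tn| = #|orbit to N x0| ->
  (forall a b, a \in Tn -> b \in Tn -> forall x, x \in Om -> to x a = to x b -> a = b) ->
  S' \subset G -> #|S'| = #|orbit to N @: Om| ->
  (forall s t, s \in S' -> t \in S' -> forall x, x \in Om ->
     orbit to N (to x s) = orbit to N (to x t) -> s = t) ->
  exists S, clique G Om S.
Proof.
move=> sNG nNG actG trG Om0 sTN cT injT sSG cS injS.
have key : forall s t a b, s \in S' -> t \in S' -> a \in Tn -> b \in Tn ->
    forall x, x \in Om -> to x (s * a) = to x (t * b) -> s = t /\ a = b.
  move=> s t a b Ss St Ta Tb x Omx; rewrite !actM => E.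
  have Na := subsetP sTN a Ta; have Nb := subsetP sTN b Tb.
  have Eo : orbit to N (to x s) = orbit to N (to x t).
    by rewrite -(orbit_act _ (to x s) Na) E orbit_act.
  have st := injS s t Ss St x Omx Eo; subst t; split => //.
  apply: (injT a b Ta Tb (to x s)) => //.
  by apply: actG => //; apply: (subsetP sSG).
exists [set st.1 * st.2 | st in setX S' Tn]; split.
- apply/subsetP => z /imsetP[[s a] /setXP[Ss Ta] ->] /=.
  by rewrite groupM // ?(subsetP sSG s Ss) // (subsetP sNG) // (subsetP sTN).
- rewrite card_in_imset; last first.
    move=> [s a] [t b] /setXP[Ss Ta] /setXP[St Tb] /= E.
    have [-> ->] := key s t a b Ss St Ta Tb x0 Om0 (congr1 (to x0) E); done.
  rewrite cardsX cS cT; symmetry; apply: card_uniform_partition; last first.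
    by apply: orbit_partition; apply: acts_of => g Gg; apply: actG; apply: (subsetP sNG).
  move=> A /imsetP[x Omx ->]; have [g Gg <-] := trG x0 x Om0 Omx.
  by rewrite -orbitN_setact ?card_setact // (subsetP nNG).
- move=> u v /imsetP[[s a] /setXP[Ss Ta] ->] /imsetP[[t b] /setXP[St Tb] ->] /= x Omx E.
  by have [-> ->] := key s t a b Ss St Ta Tb x Omx E.
Qed.

End Gen.


Lemma equal_card_inj (T : finType) (A B : {set T}) :
  #|A| = #|B| -> exists f : T -> T, {in A, forall u, f u \in B} /\ {in A &, injective f}.
Proof.
move=> cAB.
case: (set_0Vmem B) => [B0|[b0 Bb0]].
  have A0 : A = set0 by apply/eqP; rewrite -cards_eq0 cAB B0 cards0.
  by exists id; split => u; rewrite A0 inE.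
exists (fun u => nth b0 (enum B) (index u (enum A))); split.
  move=> u Au; rewrite -mem_enum; apply: mem_nth.
  by rewrite -cardE -cAB cardE index_mem mem_enum.
move=> u v Au Av /eqP; rewrite nth_uniq ?enum_uniq //; last 2 first.
- by rewrite -cardE -cAB cardE index_mem mem_enum.
- by rewrite -cardE -cAB cardE index_mem mem_enum.
move/eqP/(congr1 (nth u (enum A))).
by rewrite !nth_index ?mem_enum.
Qed.

Section CT.
Variables (gT : finGroupType) (T : finType) (to : {action gT &-> T}).

Lemma common_transversal (N : {group gT}) (x0 y0 : T) :
  (forall a b, a \in N -> b \in N -> to x0 (a * b) = to x0 (b * a)) ->
  (forall a b, a \in N -> b \in N -> to y0 (a * b) = to y0 (b * a)) ->
  #|orbit to N x0| = #|orbit to N y0| ->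
  exists2 Tn : {set gT}, Tn \subset N & [/\ #|Tn| = #|orbit to N x0|,
     {in Tn &, forall a b, to x0 a = to x0 b -> a = b} &
     {in Tn &, forall a b, to y0 a = to y0 b -> a = b}].
Proof.
move=> cx cy corb.
set H := 'C_N[x0 | to]; set K := 'C_N[y0 | to].
set O := orbit to K x0; set O' := orbit to H y0.
have sHN : H \subset N by apply: subsetIl.
have sKN : K \subset N by apply: subsetIl.
have cOO : #|O| = #|O'|.
  have e1 := card_orbit_stab to K x0; have e2 := card_orbit_stab to H y0.
  have e3 := card_orbit_stab to N x0; have e4 := card_orbit_stab to N y0.
  have eHK : #|H| = #|K|.
    apply/eqP; rewrite -(eqn_pmul2l (_ : 0 < #|orbit to N x0|)); last first.
      by apply/card_gt0P; exists x0; apply: orbit_refl.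
    by rewrite e3 {1}corb e4.
  have eC : 'C_K[x0 | to] = 'C_H[y0 | to].
    apply/setP => z; rewrite /H /K !in_setI !inE.
    by case: (z \in N); case: ([set x0] \subset _); case: ([set y0] \subset _).
  apply/eqP; rewrite -(eqn_pmul2r (_ : 0 < #|'C_K[x0 | to]|)); last first.
    by apply/card_gt0P; exists 1; apply: group1.
  by rewrite e1 eC e2 eHK.
have [phi [phiO phiI]] := equal_card_inj cOO.
pose t y := odflt 1 [pick t in N | orbit to K (to x0 t) == orbit to K y].
have tP : forall y, y \in orbit to N x0 ->
    t y \in N /\ orbit to K (to x0 (t y)) = orbit to K y.
  move=> y /orbitP[n Nn <-]; rewrite /t; case: pickP => [t' /andP[Nt /eqP E]|/(_ n)] //=.
  by rewrite Nn eqxx.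
have tE : forall y y', orbit to K y = orbit to K y' -> t y = t y'.
  by move=> y y' E; rewrite /t E.
pose u y := to y (t y)^-1.
have uO : forall y, y \in orbit to N x0 -> u y \in O.
  move=> y Ny; have [Nt Et] := tP y Ny.
  have : y \in orbit to K (to x0 (t y)) by rewrite Et orbit_refl.
  case/orbitP => k Kk Ey; rewrite /u -{1}Ey.
  have Nk := subsetP sKN k Kk.
  by rewrite -[to (to x0 _) k]actM cx // actM actK; apply: mem_orbit.
pose kk w := odflt 1 [pick k in K | to x0 k == w].
have kkP : forall w, w \in O -> kk w \in K /\ to x0 (kk w) = w.
  move=> w /orbitP[k Kk <-]; rewrite /kk; case: pickP => [k' /andP[Kk' /eqP E]|/(_ k)] //=.
  by rewrite Kk eqxx.
pose hh w := odflt 1 [pick h in H | to y0 h == w].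
have hhP : forall w, w \in O' -> hh w \in H /\ to y0 (hh w) = w.
  move=> w /orbitP[h Hh <-]; rewrite /hh; case: pickP => [h' /andP[Hh' /eqP E]|/(_ h)] //=.
  by rewrite Hh eqxx.
pose s y := kk (u y) * hh (phi (u y)) * t y.
have sN : forall y, y \in orbit to N x0 -> s y \in N.
  move=> y Ny; have [Kk _] := kkP _ (uO y Ny); have [Hh _] := hhP _ (phiO _ (uO y Ny)).
  have [Nt _] := tP y Ny.
  by rewrite !groupM // ?(subsetP sKN _ Kk) ?(subsetP sHN _ Hh).
have sx : forall y, y \in orbit to N x0 -> to x0 (s y) = y.
  move=> y Ny; have [Kk Ek] := kkP _ (uO y Ny); have [Hh _] := hhP _ (phiO _ (uO y Ny)).
  have [Nt _] := tP y Ny.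
  have Hh' := Hh; move: Hh' => /setIP[_ /astab1P hx].
  have Nk := subsetP sKN _ Kk; have Nh := subsetP sHN _ Hh.
  rewrite /s /= actM cx // actM hx Ek /u actKV //.
have sy : forall y, y \in orbit to N x0 -> to y0 (s y) = to (phi (u y)) (t y).
  move=> y Ny; have [Kk _] := kkP _ (uO y Ny); have [_ Eh] := hhP _ (phiO _ (uO y Ny)).
  move: Kk => /setIP[_ /astab1P ky].
  by rewrite /s /= !actM ky Eh.
exists (s @: orbit to N x0).
  by apply/subsetP => z /imsetP[y Ny ->]; apply: sN.
split.
- rewrite card_in_imset // => y y' Ny Ny' E.
  by rewrite -(sx y Ny) -(sx y' Ny') E.
- move=> a b /imsetP[y Ny ->] /imsetP[y' Ny' ->] E.
  by rewrite (sx y Ny) (sx y' Ny') in E; rewrite E.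
move=> a b /imsetP[y Ny ->] /imsetP[y' Ny' ->]; rewrite (sy y Ny) (sy y' Ny') => E.
have [Nt Et] := tP y Ny; have [Nt' Et'] := tP y' Ny'.
have inH : forall w tt, w \in O' -> tt \in N -> to w tt \in orbit to H (to y0 tt).
  move=> w tt /orbitP[h0 Hh0 <-] Ntt.
  have Nh0 := subsetP sHN _ Hh0.
  by rewrite -actM cy // actM; apply: mem_orbit.
have OH : orbit to H (to y0 (t y)) = orbit to H (to y0 (t y')).
  have /orbit_eqP A := inH _ _ (phiO _ (uO y Ny)) Nt.
  have /orbit_eqP B := inH _ _ (phiO _ (uO y' Ny')) Nt'.
  by rewrite -A -B E.
have ty : t y = t y'.
  apply: tE; rewrite -Et -Et'.
  have : to y0 (t y') \in orbit to H (to y0 (t y)) by rewrite OH orbit_refl.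
  case/orbitP => h Hh Eh.
  have Nh := subsetP sHN h Hh.
  set c := t y * h * (t y')^-1.
  have Kc : c \in K.
    apply/setIP; split; first by rewrite !groupM ?groupV.
    by apply/astab1P; rewrite /c !actM Eh actK.
  have Nc := subsetP sKN c Kc.
  have -> : t y' = c^-1 * (t y * h) by rewrite /c invMg invgK -mulgA mulVg mulg1.
  have Nth : t y * h \in N by rewrite groupM.
  rewrite (cx _ _ (groupVr Nc) Nth) actM.
  have -> : to x0 (t y * h) = to x0 (t y).
    move: Hh => /setIP[_ /astab1P hx].
    by rewrite cx // actM hx.
  apply/esym/orbit_eqP; apply: mem_orbit; by rewrite groupV.
rewrite -ty in E; have /act_inj := E => /(phiI _ _ (uO y Ny) (uO y' Ny')) Eu.
by rewrite -(sx y Ny) -(sx y' Ny') /s Eu ty.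
Qed.

End CT.


Section Graph.
Variables (gT : finGroupType) (G : {group gT}) (p : nat).
Hypothesis pr_p : prime p.

Record ghyp (T : finType) (to : {action gT &-> T}) (Om : {set T}) (e : rel T) : Prop :=
 GHyp {
  gh_edge : forall x y, e x y -> (x \in Om) && (y \in Om);
  gh_irr : forall x, ~~ e x x;
  gh_sym : forall x y, e x y = e y x;
  gh_conn : {in Om &, forall x y, connect e x y};
  gh_val : {in Om, forall x, #|[set y | e x y]| = p};
  gh_aut : forall g, g \in G -> forall x y, e (to x g) (to y g) = e x y;
  gh_arc : forall u v x y, e u v -> e x y ->
             exists2 g, g \in G & (to u g = x /\ to v g = y)
}.

Section WithHyp.
Variables (T : finType) (to : {action gT &-> T}) (Om : {set T}) (e : rel T).
Hypothesis H : ghyp to Om e.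

Lemma nbr x : x \in Om -> exists y, e x y.
Proof.
move=> Omx; have := gh_val H Omx; have p0 := prime_gt0 pr_p.
case: (set_0Vmem [set y | e x y]) => [->|[y]]; first by rewrite cards0 => p0'; rewrite -p0' in p0.
by rewrite inE => exy; exists y.
Qed.

Lemma edgeL x y : e x y -> x \in Om.
Proof. by move/(gh_edge H)/andP=> []. Qed.
Lemma edgeR x y : e x y -> y \in Om.
Proof. by move/(gh_edge H)/andP=> []. Qed.

Lemma autV g x y : g \in G -> e (to x g) y = e x (to y g^-1).
Proof. by move=> Gg; rewrite -(gh_aut H (groupVr Gg)) actK. Qed.

Lemma actOm g x : g \in G -> x \in Om -> to x g \in Om.
Proof.
move=> Gg Omx; have [y exy] := nbr Omx.
by apply: (@edgeL _ (to y g)); rewrite (gh_aut H Gg).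
Qed.

Lemma transOm x y : x \in Om -> y \in Om -> exists2 g, g \in G & to x g = y.
Proof.
move=> Omx Omy; have [x' e1] := nbr Omx; have [y' e2] := nbr Omy.
by have [g Gg [E1 _]] := gh_arc H e1 e2; exists g.
Qed.

Lemma closedOm (U : {set T}) x : x \in Om -> x \in U ->
  (forall w w', w \in U -> e w w' -> w' \in U) -> Om \subset U.
Proof.
move=> Omx Ux clU; apply/subsetP => z Omz.
have /connectP[s pth ->] := gh_conn H Omx Omz.
elim: s x Ux {Omx} pth => [|a s IH] x Ux //= /andP[exa pth].
by apply: (IH a) => //; apply: clU exa.
Qed.

Lemma moving x : x \in Om -> exists2 g, g \in G & to x g != x.
Proof.
move=> Omx; have [y exy] := nbr Omx; have [g Gg [E1 _]] := gh_arc H exy (etrans (gh_sym H y x) exy).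
exists g => //; rewrite E1; apply/eqP => yx; by have := gh_irr H x; rewrite -{2}yx exy.
Qed.

Section Normal.
Variable N : {group gT}.
Hypotheses (sNG : N \subset G) (nNG : G \subset 'N(N)).
Local Notation B := (orbit to N).

Lemma Bact g x : g \in G -> B (to x g) = to^* (B x) g.
Proof. by move=> Gg; rewrite orbitN_setact // (subsetP nNG). Qed.

Lemma L1 x y : e x y -> B x = B y -> {in Om, forall z, B z = B x}.
Proof.
move=> exy Bxy z Omz.
have pres : forall u v, e u v -> B u = B v.
  move=> u v euv; have [g Gg [<- <-]] := gh_arc H exy euv.
  by rewrite !Bact // Bxy.
have sub : Om \subset [set w | B w == B x].
  apply: (closedOm (edgeL exy)); first by rewrite inE.
  by move=> w w'; rewrite !inE => /eqP Bw /pres <-; rewrite Bw.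
by have := subsetP sub z Omz; rewrite inE => /eqP.
Qed.

Lemma nbrs_transfer v u : (forall w, e v w -> w \in B u) ->
  forall w, w \in B v -> forall w', e w w' -> w' \in B u.
Proof.
move=> hv w /orbitP[n Nn <-] w' ew.
have Gn := subsetP sNG n Nn.
rewrite autV // in ew; have := hv _ ew.
by rewrite orbit_actr ?groupV.
Qed.

Lemma L2 x y y' : e x y -> e x y' -> B y = B y' ->
  (forall a b, a \in Om -> b \in Om -> ~ (Om \subset B a :|: B b)) -> y = y'.
Proof.
move=> exy exy' Byy' nb2; apply/eqP; apply/negPn/negP => nyy'.
set Ga := [set w | e x w].
set C := [set w in Ga | B w == B y].
have sCG : C \subset Ga by apply/subsetP => w; rewrite inE => /andP[].
have cls : forall z, z \in Ga -> #|[set w in Ga | B z == B w]| = #|C|.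
  move=> z; rewrite inE => exz.
  have [g Gg [gx gy]] := gh_arc H exy exz.
  have gxV : to x g^-1 = x by rewrite -{1}gx actK.
  suff -> : [set w in Ga | B z == B w] = [set to w g | w in C].
    by rewrite card_imset //; apply: act_inj.
  apply/setP => w; apply/idP/imsetP.
  - rewrite !inE => /andP[exw /eqP Bzw].
    exists (to w g^-1); last by rewrite actKV.
    rewrite !inE -{1}gxV (gh_aut H (groupVr Gg)) exw /=.
    rewrite Bact ?groupV // -Bzw -gy Bact //.
    by rewrite -(actM (set_action to)) mulgV act1.
  - case=> w0; rewrite !inE => /andP[exw0 /eqP Bw0] ->.
    by rewrite -gx (gh_aut H Gg) exw0 /= -gy !Bact // Bw0.
have cGa : #|Ga| = (#|preim_partition B Ga| * #|C|)%N.
  apply: card_uniform_partition (preim_partitionP B Ga).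
  by move=> A /imsetP[z Gaz ->]; apply: cls.
have Omx := edgeL exy.
have C2 : 1 < #|C|.
  have yC : y \in C by rewrite !inE exy eqxx.
  have y'C : y' \in C by rewrite !inE exy' Byy' eqxx.
  rewrite (cardD1 y) yC add1n ltnS; apply/card_gt0P; exists y'.
  by rewrite !inE eq_sym nyy' exy' Byy' eqxx.
have CGa : C = Ga.
  apply/eqP; rewrite eqEcard sCG /=.
  have : #|C| %| p by rewrite -(gh_val H Omx) cGa dvdn_mull.
  move/(prime_nt_dvdP pr_p); rewrite (gtn_eqF C2) => /(_ isT) ->.
  by rewrite (gh_val H Omx).
have allIn : forall w, e x w -> w \in B y.
  move=> w exw; have : w \in C by rewrite CGa inE.
  by rewrite !inE => /andP[_ /eqP <-]; apply: orbit_refl.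
have Omy := edgeR exy.
have [g Gg [gx gy]] := gh_arc H exy (etrans (gh_sym H y x) exy).
have yx : forall w, e y w -> w \in B x.
  move=> w; rewrite -gx autV // => /allIn Bw.
  by rewrite -(actKV to g w) -gy Bact // mem_setact.
apply: (nb2 x y Omx Omy); apply: (closedOm (U := B x :|: B y) Omx).
  by rewrite inE orbit_refl.
move=> w w'; case/setUP => Bw ew'; rewrite inE.
  by rewrite (nbrs_transfer allIn Bw ew') orbT.
by rewrite (nbrs_transfer yx Bw ew').
Qed.

Lemma setactK g A : to^* (to^* A g) g^-1 = A.
Proof. by rewrite -(actM (set_action to)) mulgV act1. Qed.

Lemma BOm a : a \in Om -> B a \subset Om.
Proof.
by move=> Oma; apply/subsetP => z /orbitP[n Nn <-]; apply: actOm => //; apply: (subsetP sNG).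
Qed.

Local Notation Om' := (B @: Om).

Lemma memB A a : A \in Om' -> a \in A -> A = B a /\ a \in Om.
Proof.
case/imsetP => z Omz -> az; split; first by apply/esym/orbit_eqP.
exact: (subsetP (BOm Omz)).
Qed.

Hypothesis nb2 : forall a b, a \in Om -> b \in Om -> ~ (Om \subset B a :|: B b).

Lemma L3 n x : n \in N -> x \in Om -> to x n = x -> {in Om, forall z, to z n = z}.
Proof.
move=> Nn Omx xn z Omz; have Gn := subsetP sNG n Nn.
have sub : Om \subset [set z | to z n == z].
  apply: (closedOm Omx); first by rewrite inE xn.
  move=> w w'; rewrite !inE => /eqP wn eww'; apply/eqP/esym.
  apply: (L2 eww') => //; last by rewrite orbit_act.
  by rewrite -{1}wn (gh_aut H Gn).
by have := subsetP sub z Omz; rewrite inE => /eqP.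
Qed.

Definition eq' := fun A C : {set T} =>
  [&& A \in Om', C \in Om' & [exists a in A, exists c in C, e a c]].

Lemma eq'P A C : reflect (exists a c, [/\ A \in Om', C \in Om', a \in A, c \in C & e a c]) (eq' A C).
Proof.
apply: (iffP and3P) => [[OA OC /existsP[a /andP[aA /existsP[c /andP[cC eac]]]]]|[a [c [OA OC aA cC eac]]]].
  by exists a, c.
split => //; apply/existsP; exists a; rewrite aA /=; apply/existsP; exists c; by rewrite cC.
Qed.

Lemma quot_ghyp : ghyp (set_action to) Om' eq'.
Proof.
have OmB : forall a, a \in Om -> B a \in Om' by move=> a Oma; apply: imset_f.
split.
- by move=> A C /and3P[-> -> _].
- move=> A; apply/negP => /eq'P[a [c [OA _ aA cA eac]]].
  have [Aa Oma] := memB OA aA; have [Ac _] := memB OA cA.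
  have := L1 eac; rewrite -Aa -Ac => /(_ erefl) allB.
  apply: (nb2 Oma Oma); apply/subsetP => z Omz.
  by have := orbit_refl to N z; rewrite (allB z Omz) Aa inE => ->.
- move=> A C; apply/eq'P/eq'P => -[a [c [OA OC aA cC eac]]]; exists c, a; split => //;
  by rewrite (gh_sym H).
- move=> A C OA OC.
  have /set0Pn[a aA] : A != set0 by case/imsetP: OA => z _ ->; apply/set0Pn; exists z; apply: orbit_refl.
  have /set0Pn[c cC] : C != set0 by case/imsetP: OC => z _ ->; apply/set0Pn; exists z; apply: orbit_refl.
  have [-> Oma] := memB OA aA; have [-> Omc] := memB OC cC.
  have /connectP[s pth ->] := gh_conn H Oma Omc.
  elim: s a Oma {aA OA} pth => [|b s IH] a Oma //= /andP[eab pth].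
  apply: (connect_trans (connect1 _)) (IH b (edgeR eab) pth).
  by apply/eq'P; exists a, b; split; rewrite ?OmB ?orbit_refl // (edgeR eab).
- move=> A OA; have /set0Pn[a aA] : A != set0.
    by case/imsetP: OA => z _ ->; apply/set0Pn; exists z; apply: orbit_refl.
  have [-> Oma] := memB OA aA.
  have inj : {in [set y | e a y] &, injective B}.
    move=> y y'; rewrite !inE => ey ey' Byy'; exact: (L2 ey ey' Byy').
  suff -> : [set C | eq' (B a) C] = B @: [set y | e a y] by rewrite card_in_imset // (gh_val H Oma).
  apply/setP => C; rewrite inE; apply/eq'P/imsetP.
  + case=> a' [c [_ OC a'A cC ea'c]].
    have [n Nn ea'] : exists2 n, n \in N & to a n = a' by apply/orbitP.
    have Gn := subsetP sNG n Nn.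
    exists (to c n^-1); first by rewrite inE -autV // ea'.
    have [-> _] := memB OC cC; by rewrite orbit_act ?groupV.
  + case=> y; rewrite inE => eay ->; exists a, y; split; rewrite ?OmB ?orbit_refl //.
    exact: edgeR eay.
- have fwd : forall g A C, g \in G -> eq' A C -> eq' (to^* A g) (to^* C g).
    move=> g A C Gg /eq'P[a [c [OA OC aA cC eac]]].
    have [Aa Oma] := memB OA aA; have [Cc Omc] := memB OC cC.
    apply/eq'P; exists (to a g), (to c g); split; rewrite ?mem_setact ?(gh_aut H Gg) //.
      by rewrite Aa -Bact // OmB // actOm.
    by rewrite Cc -Bact // OmB // actOm.
  move=> g Gg A C /=; apply/idP/idP; last exact: fwd.
  by move/(fwd _ _ _ (groupVr Gg)); rewrite !setactK.
- move=> A C A' C' /eq'P[a [c [OA OC aA cC eac]]] /eq'P[a' [c' [OA' OC' aA' cC' eac']]].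
  have [g Gg [ga gc]] := gh_arc H eac eac'.
  exists g => //=; split.
    by have [-> _] := memB OA aA; have [-> _] := memB OA' aA'; rewrite -Bact // ga.
  by have [-> _] := memB OC cC; have [-> _] := memB OC' cC'; rewrite -Bact // gc.
Qed.

End Normal.
End WithHyp.
End Graph.


Section Main.
Variables (gT : finGroupType) (G : {group gT}) (p : nat).
Hypothesis pr_p : prime p.
Hypothesis solG : solvable G.

Lemma main_clique n : forall (T : finType) (to : {action gT &-> T}) (Om : {set T}) (e : rel T),
  #|Om| <= n -> ghyp G p to Om e -> exists S, clique to G Om S.
Proof.
elim: n => [|n IH] T to Om e cOm Hg.
  exists set0; split; rewrite ?sub0set ?cards0 //; first by move: cOm; rewrite leqn0 => /eqP.
  by move=> s t; rewrite inE.
have [Om0|[x0 Omx0]] := set_0Vmem Om.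
  exists set0; split; rewrite ?sub0set ?cards0 ?Om0 ?cards0 //.
  by move=> s t; rewrite inE.
set Kr := 'C(Om | to).
have [m Gm] := derivedP _ solG.
have exP : exists k, G^`(k) \subset Kr by exists m; rewrite Gm sub1G.
case: (ex_minnP exP) => i iK imin.
have i0 : 0 < i.
  rewrite lt0n; apply/eqP => i0; move: iK; rewrite i0 /=.
  have [g Gg gx] := moving pr_p Hg Omx0.
  by move/subsetP/(_ g Gg)/astabP/(_ x0 Omx0)/eqP; rewrite (negbTE gx).
pose N := (G^`(i.-1))%G.
have sNG : N \subset G by apply: der_sub.
have nNG : G \subset 'N(N) by apply: der_norm.
have notK : ~~ (N \subset Kr).
  apply/negP => NK; have := imin _ NK; by rewrite -ltnS prednK // ltnn.
have comm : forall a b, a \in N -> b \in N -> forall z, z \in Om -> to z (a * b) = to z (b * a).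
  move=> a b Na Nb z Omz.
  have cK : [~ a, b] \in Kr.
    apply: (subsetP iK); rewrite -(prednK i0) dergSn; exact: mem_commg.
  rewrite commgC actM (astab_act cK) //.
  by apply: (actOm pr_p Hg); rewrite ?groupM ?(subsetP sNG).
have actG : {in G, forall g, {in Om, forall x, to x g \in Om}}.
  by move=> g Gg x Omx; apply: (actOm pr_p Hg).
have trG : {in Om &, forall x y, exists2 g, g \in G & to x g = y}.
  by move=> x y; apply: (transOm pr_p Hg).
have cardB : forall x y, x \in Om -> y \in Om -> #|orbit to N x| = #|orbit to N y|.
  move=> x y Omx Omy; have [g Gg <-] := trG x y Omx Omy.
  by rewrite (Bact _ nNG) // card_setact.
have BofOm : forall z a, z \in orbit to N a -> orbit to N z = orbit to N a.
  by move=> z a /orbit_eqP.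
case: (boolP [exists a in Om, exists b in Om, Om \subset orbit to N a :|: orbit to N b]).
- case/exists_inP => a Oma /exists_inP[b Omb sOm].
  have [Tn sTN [cTn ia ib]] := common_transversal (fun u v Nu Nv => comm u v Nu Nv a Oma) (fun u v Nu Nv => comm u v Nu Nv b Omb) (cardB a b Oma Omb).
  have injT : forall u v, u \in Tn -> v \in Tn -> forall z, z \in Om -> to z u = to z v -> u = v.
    move=> u v Tu Tv z Omz; have Nu := subsetP sTN u Tu; have Nv := subsetP sTN v Tv.
    have := subsetP sOm z Omz; rewrite inE => /orP[] /orbitP[c Nc <-].
      rewrite -!actM comm // [to a (c * v)]comm // !actM => /act_inj; exact: ia.
    rewrite -!actM comm // [to b (c * v)]comm // !actM => /act_inj; exact: ib.
  have blk : forall z, z \in Om -> orbit to N z = orbit to N a \/ orbit to N z = orbit to N b.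
    move=> z Omz; have := subsetP sOm z Omz; rewrite inE => /orP[] /BofOm; tauto.
  case: (eqVneq (orbit to N a) (orbit to N b)) => [Bab|nBab].
    apply: (lift_clique (S' := [set 1]) sNG nNG actG trG Oma sTN cTn injT).
    + by rewrite sub1set group1.
    + suff -> : [set orbit to N x | x in Om] = [set orbit to N a] by rewrite !cards1.
      apply/setP => A; rewrite inE; apply/imsetP/eqP => [[z Omz ->]|->]; last by exists a.
      by case: (blk z Omz) => // ->.
    + by move=> s t; rewrite !inE => /eqP -> /eqP ->.
  have [g Gg gab] := trG a b Oma Omb.
  have Bga : to^* (orbit to N a) g = orbit to N b by rewrite -gab (Bact to nNG a Gg).
  have Bgb : to^* (orbit to N b) g = orbit to N a.
    have := blk _ (actG g Gg b Omb); rewrite (Bact _ nNG) //; case=> // E.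
    have : to^* (to^* (orbit to N a) g) g^-1 = to^* (to^* (orbit to N b) g) g^-1 by rewrite Bga E.
    by rewrite !setactK => Eab; rewrite Eab eqxx in nBab.
  have g1 : g != 1 by apply/eqP => g1; move: nBab; rewrite -gab g1 act1 eqxx.
  apply: (lift_clique (S' := [set 1; g]) sNG nNG actG trG Oma sTN cTn injT).
  + by apply/subsetP => s; rewrite !inE => /orP[] /eqP ->.
  + rewrite cards2 eq_sym g1.
    suff -> : [set orbit to N x | x in Om] = [set orbit to N a; orbit to N b] by rewrite cards2 nBab.
    apply/setP => A; rewrite !inE; apply/imsetP/orP => [[z Omz ->]|[]/eqP->].
    * by case: (blk z Omz) => ->; [left|right].
    * by exists a.
    * by exists b.
  + have key : forall z, z \in Om -> orbit to N z <> orbit to N (to z g).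
      move=> z Omz; rewrite (Bact _ nNG) //.
      by case: (blk z Omz) => ->; [rewrite Bga|rewrite Bgb] => E; move: nBab; rewrite E eqxx.
    move=> s t; rewrite !inE => /orP[]/eqP-> /orP[]/eqP-> // z Omz; rewrite act1.
      by move/(key z Omz).
    by move/esym/(key z Omz).
- rewrite negb_exists_in => /forall_inP nb2'.
  have nb2 : forall a b, a \in Om -> b \in Om -> ~ (Om \subset orbit to N a :|: orbit to N b).
    move=> a b Oma Omb sOm; have := nb2' a Oma; rewrite negb_exists_in => /forall_inP/(_ b Omb).
    by rewrite sOm.
  have Hq := quot_ghyp pr_p Hg sNG nNG nb2.
  have partOm : #|Om| = (#|[set orbit to N x | x in Om]| * #|orbit to N x0|)%N.
    apply: card_uniform_partition; last first.
      by apply: orbit_partition; apply: acts_of => g Gg; apply: actG; apply: (subsetP sNG).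
    by move=> A /imsetP[x Omx ->]; apply: cardB.
  have [u Nu nuK] := subsetPn notK.
  have [z Omz zu] : exists2 z, z \in Om & to z u != z.
    case: (boolP [exists z in Om, to z u != z]) => [/exists_inP[z Omz zu]|]; first by exists z.
    rewrite negb_exists_in => /forall_inP allf; case/negP: nuK; apply/astabP => z Omz.
    by apply/eqP; have := allf z Omz; rewrite negbK.
  have B2 : 1 < #|orbit to N x0|.
    rewrite (cardB x0 z Omx0 Omz) (cardD1 z) orbit_refl add1n ltnS; apply/card_gt0P.
    by exists (to z u); rewrite !inE zu mem_orbit.
  have Om'0 : 0 < #|[set orbit to N x | x in Om]|.
    by apply/card_gt0P; exists (orbit to N x0); apply: imset_f.
  have lt : #|[set orbit to N x | x in Om]| <= n.
    rewrite -ltnS; apply: leq_trans cOm; rewrite partOm -{1}(muln1 #|_|) ltn_pmul2l //.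
  have [S' [sSG cS' injS']] := IH _ _ _ _ lt Hq.
  pose t y := odflt 1 [pick v in N | to x0 v == y].
  have tP : forall y, y \in orbit to N x0 -> t y \in N /\ to x0 (t y) = y.
    move=> y /orbitP[v Nv <-]; rewrite /t; case: pickP => [v' /andP[Nv' /eqP E]|/(_ v)] //=.
    by rewrite Nv eqxx.
  apply: (lift_clique (x0 := x0) (S' := S') (Tn := [set t y | y in orbit to N x0]) sNG nNG actG trG Omx0).
  + by apply/subsetP => v /imsetP[y Ny ->]; case: (tP y Ny).
  + rewrite card_in_imset // => y y' Ny Ny' E.
    by rewrite -(proj2 (tP y Ny)) -(proj2 (tP y' Ny')) E.
  + move=> a b /imsetP[y Ny ->] /imsetP[y' Ny' ->] w Omw E.
    have [Na Ey] := tP y Ny; have [Nb Ey'] := tP y' Ny'.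
    have Nab : t y * (t y')^-1 \in N by rewrite groupM ?groupV.
    have fix1 : to w (t y * (t y')^-1) = w by rewrite actM E actK.
    have := L3 pr_p Hg sNG nNG nb2 Nab Omw fix1 Omx0.
    by rewrite actM => /(canRL (actKV to _)); rewrite Ey Ey' => ->.
  + exact: sSG.
  + exact: cS'.
  + move=> s' t' Ss Tt w Omw E; apply: (injS' s' t' Ss Tt (orbit to N w)); first exact: imset_f.
    by rewrite /= -!(Bact to nNG) ?(subsetP sSG).
Qed.

End Main.


Theorem proposition4p1 (p : nat) (V : finType) (e : rel V)
    (G : {group {perm V}}) :
  prime p ->
  simple_graph e ->
  graph_connected e ->
  regular_of_valency e p ->
  automorphism_group e G ->
  solvable G ->
  arc_transitive_on e G ->
  EKR_property G.
Proof.
move=> pr_p [irr sym] conn val aut solG arc.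
have Hg : ghyp G p 'P [set: V] e.
  split.
  - by move=> x y _; rewrite !inE.
  - by move=> x; rewrite irr.
  - exact: sym.
  - by move=> x y _ _; apply: conn.
  - by move=> x _; apply: val.
  - by move=> g Gg x y; apply: aut.
  - exact: arc.
have [S [sSG cS injS]] := main_clique pr_p solG (leqnn _) Hg.
apply: (ekr_from_clique sSG).
- by rewrite cS cardsT.
- by move=> s t Ss St x E; apply: (injS s t Ss St x (in_setT x)).
- by move=> x y; apply: (transOm pr_p Hg); rewrite inE.
Qed.
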